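(* Let $(V,\mathcal H,\iota,W)$ be a generalized functional theory and $k$ a positive integer. Let $\bar{\mathcal F}_p$ be the pure functional of the $k$-convexified theory $(V,\mathcal H\otimes\mathbb C^k,\bar\iota,W\otimes\mathbb 1)$, where $\bar\iota(v)=\iota(v)\otimes\mathbb 1$. Then $\mathrm{conv}_k(\mathcal F_p)=\bar{\mathcal F}_p$.
   Context: A generalized functional theory is a tuple $(V,\mathcal H,\iota,W)$ with $V$ a finite-dimensional real vector space, $\mathcal H$ a finite-dimensional complex Hilbert space, $\iota:V\to i\mathfrak u(\mathcal H)$ linear into the Hermitian operators, $W$ Hermitian. Density operators are regarded as linear functionals via the trace pairing, and $\iota^*$ is the dual map. The pure functional of such a theory is $\mathcal F_p(\rho)=\min\{\langle\Psi|W|\Psi\rangle:\|\Psi\|=1,\iota^*(|\Psi\rangle\langle\Psi|)=\rho\}$, defined on the set $\iota^*(\mathcal P)$ of images of pure states; $\bar{\mathcal F}_p$ is defined analogously with $\mathcal H\otimes\mathbb C^k$, $\bar\iota$, $W\otimes\mathbb 1$. For $f:X\to\mathbb R$, $\mathrm{conv}_k(X)=\{\sum_{i=1}^kt_is_i:s_i\in X,t_i\ge0,\sum t_i=1\}$ and $\mathrm{conv}_k(f):\mathrm{conv}_k(X)\to\mathbb R$, $s\mapsto\inf\{\sum_{i=1}^kt_if(s_i):\sum_it_is_i=s, s_i\in X,t_i\ge0,\sum t_i=1\}$. *)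

(* Defs.v *)
From HB Require Import structures.
From mathcomp Require Import all_boot all_order all_algebra.
From mathcomp Require Import all_classical all_reals.
From mathcomp Require Import complex mxtens.

Set Implicit Arguments.
Unset Strict Implicit.
Unset Printing Implicit Defensive.

Import Order.TTheory GRing.Theory Num.Theory.
Local Open Scope ring_scope.
Local Open Scope classical_set_scope.

Definition adjmx (R : rcfType) (p q : nat) (A : 'M[R[i]]_(p, q)) : 'M[R[i]]_(q, p) :=
  map_mx Num.conj (A^T).

Definition is_hermitian (R : rcfType) (n : nat) (A : 'M[R[i]]_n) : Prop := adjmx A = A.

Definition unit_vec (R : rcfType) (n : nat) (psi : 'cV[R[i]]_n) : Prop :=
  (adjmx psi *m psi) 0 0 = 1.

Definition proj (R : rcfType) (n : nat) (psi : 'cV[R[i]]_n) : 'M[R[i]]_n :=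
  psi *m adjmx psi.

(* V = R^m with standard basis e_j; iota is determined by A j = iota(e_j),
   iota(v) = sum_j v_j A j.  The dual map iota^*(rho) : V -> R, v |-> tr(rho iota(v)),
   is recorded by its coordinates in the dual basis: (tr(rho A j))_j
   (these traces are real for rho, A j Hermitian; we take the real part). *)
Definition iota_star (R : rcfType) (n m : nat) (A : 'I_m -> 'M[R[i]]_n)
  (rho : 'M[R[i]]_n) : 'rV[R]_m :=
  \row_j complex.Re (\tr (rho *m A j)).

Definition pure_dom (R : rcfType) (n m : nat) (A : 'I_m -> 'M[R[i]]_n) : set 'rV[R]_m :=
  [set s | exists psi : 'cV[R[i]]_n, unit_vec psi /\ iota_star A (proj psi) = s].

Definition expect (R : rcfType) (n : nat) (W : 'M[R[i]]_n) (psi : 'cV[R[i]]_n) : R :=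
  complex.Re ((adjmx psi *m W *m psi) 0 0).

(* pure functional F_p(rho) = min { <psi|W|psi> : ||psi|| = 1, iota^*(|psi><psi|) = rho },
   written as an infimum (meaningful on pure_dom A). *)
Definition Fp (R : realType) (n m : nat) (A : 'I_m -> 'M[R[i]]_n) (W : 'M[R[i]]_n)
  (rho : 'rV[R]_m) : R :=
  inf [set expect W psi | psi in [set psi : 'cV[R[i]]_n | unit_vec psi /\ iota_star A (proj psi) = rho]].

Definition convk_dom (R : realType) (m k : nat) (X : set 'rV[R]_m) : set 'rV[R]_m :=
  [set s | exists (t : 'I_k -> R) (x : 'I_k -> 'rV[R]_m),
     (forall i, X (x i)) /\ (forall i, 0 <= t i) /\ \sum_i t i = 1 /\
     s = \sum_i t i *: x i].

Definition convk_fun (R : realType) (m k : nat) (X : set 'rV[R]_m)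
  (f : 'rV[R]_m -> R) (s : 'rV[R]_m) : R :=
  inf [set y | exists (t : 'I_k -> R) (x : 'I_k -> 'rV[R]_m),
     (forall i, X (x i)) /\ (forall i, 0 <= t i) /\ \sum_i t i = 1 /\
     s = \sum_i t i *: x i /\ y = \sum_i t i * f (x i)].

(* k-convexified theory: H (x) C^k = C^(n*k), iotabar(v) = iota(v) (x) 1, W (x) 1 *)
Definition bar_iota (R : rcfType) (n m k : nat) (A : 'I_m -> 'M[R[i]]_n)
  : 'I_m -> 'M[R[i]]_(n * k) := fun j => A j *t (1%:M : 'M[R[i]]_k).

Definition bar_W (R : rcfType) (n k : nat) (W : 'M[R[i]]_n) : 'M[R[i]]_(n * k) :=
  W *t (1%:M : 'M[R[i]]_k).

(* Main.v *)
Require Import Defs.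
From HB Require Import structures.
From mathcomp Require Import all_boot all_order all_algebra.
From mathcomp Require Import all_classical all_reals.
From mathcomp Require Import complex mxtens.
From mathcomp Require Import ring lra.
Import Order.TTheory GRing.Theory Num.Theory.
Local Open Scope ring_scope.
Local Open Scope classical_set_scope.


Section Alg.
Local Open Scope complex_scope.
Variable R : rcfType.
Local Notation C := R[i].

Definition qf {n} (M : 'M[C]_n) (psi : 'cV[C]_n) : C := (adjmx psi *m M *m psi) 0 0.

Lemma qfE n (M : 'M[C]_n) psi :
  qf M psi = \sum_a \sum_b (psi a 0)^* * M a b * psi b 0.
Proof.
rewrite /qf mxE exchange_big /=; apply: eq_bigr => b _.
rewrite mxE mulr_suml; apply: eq_bigr => a _.
by rewrite /adjmx !mxE.
Qed.

Lemma unit_vecE n (psi : 'cV[C]_n) : unit_vec psi <-> qf 1%:M psi = 1.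
Proof. by rewrite /unit_vec /qf mulmx1. Qed.

Lemma tr_projE n (M : 'M[C]_n) psi : \tr (Defs.proj psi *m M) = qf M psi.
Proof.
rewrite qfE /mxtrace exchange_big /=; apply: eq_bigr => b _.
rewrite mxE; apply: eq_bigr => a _.
rewrite /Defs.proj !mxE big_ord1 /adjmx !mxE.
by rewrite [RHS]mulrC mulrA.
Qed.

Lemma sum_tens n k (F : 'I_(n * k) -> C) :
  \sum_p F p = \sum_a \sum_(i < k) F (mxtens_index (a, i)).
Proof.
rewrite (reindex (@mxtens_index n k)) /=; last first.
  by exists (@mxtens_unindex n k) => x _; [apply: mxtens_indexK | apply: mxtens_unindexK].
by rewrite pair_big /=; apply: eq_bigr => -[a i].
Qed.

Definition compT {n k} (Psi : 'cV[C]_(n * k)) (i : 'I_k) : 'cV[C]_n :=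
  \col_a Psi (mxtens_index (a, i)) 0.

Definition glueT {n k} (psi : 'I_k -> 'cV[C]_n) : 'cV[C]_(n * k) :=
  \col_p psi (mxtens_unindex p).2 (mxtens_unindex p).1 0.

Lemma compT_glueT n k psi i : compT (glueT (n:=n) (k:=k) psi) i = psi i.
Proof. by apply/matrixP => a b; rewrite !mxE mxtens_indexK /= [b]ord1. Qed.

Lemma qf_tens n k (M : 'M[C]_n) Psi :
  qf (M *t (1%:M : 'M[C]_k)) Psi = \sum_i qf M (compT Psi i).
Proof.
rewrite qfE sum_tens.
under eq_bigr => a _ do under eq_bigr => i _ do rewrite sum_tens.
rewrite exchange_big /=.
apply: eq_bigr => i _; rewrite qfE; apply: eq_bigr => a _.
rewrite exchange_big /=.
rewrite (bigD1 i) //= [X in _ + X]big1 ?addr0; last first.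
  move=> j ji; apply: big1 => b _.
  by rewrite tensmxE mxE eq_sym (negbTE ji) mulr0 mulr0 mul0r.
apply: eq_bigr => b _.
by rewrite tensmxE !mxE eqxx mulr1.
Qed.

Lemma tens11 n k : (1%:M : 'M[C]_n) *t (1%:M : 'M[C]_k) = 1%:M.
Proof.
apply/matrixP => p q.
case: (mxtens_indexP p) => a i; case: (mxtens_indexP q) => b j.
rewrite tensmxE !mxE (inj_eq (can_inj (@mxtens_indexK _ _))) xpair_eqE.
by case: (a == b); case: (i == j); rewrite ?mulr1 ?mulr0 ?mul0r.
Qed.

End Alg.
Arguments qf {R n}.
Arguments compT {R n k}.
Arguments glueT {R n k}.
Arguments unit_vecE {R n psi}.

Section Alg2.
Local Open Scope complex_scope.
Variable R : rcfType.
Local Notation C := R[i].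

Lemma ReD (x y : C) : complex.Re (x + y) = complex.Re x + complex.Re y.
Proof. by case: x => a b; case: y => c d. Qed.

Lemma Re_sum (I : finType) (F : I -> C) : complex.Re (\sum_i F i) = \sum_i complex.Re (F i).
Proof. by apply: (big_morph (@complex.Re R)) => //; apply: ReD. Qed.

Lemma ReMr (t : R) (z : C) : complex.Re (t%:C * z) = t * complex.Re z.
Proof. by case: z => a b /=; rewrite mul0r subr0. Qed.

Lemma qfZ n (M : 'M[C]_n) (c : C) psi : qf M (c *: psi) = c^* * c * qf M psi.
Proof.
rewrite !qfE mulr_sumr; apply: eq_bigr => a _.
rewrite mulr_sumr; apply: eq_bigr => b _.
rewrite !mxE rmorphM /=; ring.
Qed.

Lemma qf1E n (psi : 'cV[C]_n) : qf 1%:M psi = \sum_a (psi a 0)^* * psi a 0.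
Proof. by rewrite /qf mulmx1 mxE; apply: eq_bigr => a _; rewrite /adjmx !mxE. Qed.

Lemma qf1_ge0 n (psi : 'cV[C]_n) : 0 <= qf 1%:M psi.
Proof. by rewrite qf1E; apply: sumr_ge0 => a _; rewrite mulrC mulcJ_ge0. Qed.

Lemma Re_ge0 (x : C) : 0 <= x -> 0 <= complex.Re x.
Proof. by rewrite lecE => /andP[]. Qed.

Lemma qf1_real n (psi : 'cV[C]_n) : qf 1%:M psi = (complex.Re (qf 1%:M psi))%:C.
Proof. by rewrite RRe_real // ger0_real // qf1_ge0. Qed.

Lemma qf1_eq0 n (psi : 'cV[C]_n) : complex.Re (qf 1%:M psi) = 0 -> psi = 0.
Proof.
move=> h; have h0 : qf 1%:M psi = 0 by rewrite qf1_real h.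
apply/matrixP => a b; rewrite [b]ord1 mxE.
move: h0; rewrite qf1E => /psumr_eq0P h1.
have := h1 (fun i _ => ltac:(by rewrite mulrC mulcJ_ge0)) a isT => /eqP.
by rewrite mulf_eq0 conjc_eq0 orbb => /eqP.
Qed.

Lemma qf0 n (M : 'M[C]_n) : qf M 0 = 0.
Proof. by rewrite qfE big1 // => a _; rewrite big1 // => b _; rewrite !mxE mulr0. Qed.

End Alg2.
Arguments qf1_eq0 {R n psi}.

Section Alg3.
Local Open Scope complex_scope.
Variable R : rcfType.
Local Notation C := R[i].

Lemma qfZr n (M : 'M[C]_n) (s : R) psi : qf M (s%:C *: psi) = (s * s)%:C * qf M psi.
Proof.
rewrite qfZ rmorphM /=; congr (_ * _ * _).
exact: (conjc_real s).
Qed.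

Lemma normalize n (psi : 'cV[C]_n) : 0 < complex.Re (qf 1%:M psi) ->
  exists phi, unit_vec phi /\
    forall M, qf M psi = (complex.Re (qf 1%:M psi))%:C * qf M phi.
Proof.
set t := complex.Re _ => tpos.
set s := Num.sqrt t.
have spos : 0 < s by rewrite sqrtr_gt0.
have st : s * s = t by rewrite -expr2 sqr_sqrtr // ltW.
have key M : qf M psi = t%:C * qf M (s^-1%:C *: psi).
  rewrite qfZr mulrA -rmorphM /= -st.
  have -> : s * s * (s^-1 * s^-1) = 1 by field; rewrite gt_eqF.
  by rewrite mul1r.
exists (s^-1%:C *: psi); split => //.
apply/unit_vecE.
rewrite qfZr qf1_real -/t -rmorphM /= -st.
have -> : s^-1 * s^-1 * (s * s) = 1 by field; rewrite gt_eqF.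
by [].
Qed.

Lemma decomp1 n (psi phi0 : 'cV[C]_n) : unit_vec phi0 ->
  exists phi, unit_vec phi /\
    forall M, qf M psi = (complex.Re (qf 1%:M psi))%:C * qf M phi.
Proof.
move=> u0.
have : 0 <= complex.Re (qf 1%:M psi) by apply: Re_ge0; apply: qf1_ge0.
rewrite le_eqVlt => /orP[/eqP h|h]; last exact: normalize.
exists phi0; split => // M.
by rewrite -h mul0r (qf1_eq0 (esym h)) qf0.
Qed.

End Alg3.
Arguments normalize {R n psi}.
Arguments decomp1 {R n} psi {phi0}.
Arguments qfZr {R n}.

Section Alg4.
Local Open Scope complex_scope.
Variable R : rcfType.
Local Notation C := R[i].

Lemma glue_tens n k (t : 'I_k -> R) (phi : 'I_k -> 'cV[C]_n) :
  (forall i, 0 <= t i) -> \sum_i t i = 1 -> (forall i, unit_vec (phi i)) ->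
  let Psi := glueT (fun i => (Num.sqrt (t i))%:C *: phi i) in
  unit_vec Psi /\ forall M, qf (M *t (1%:M : 'M[C]_k)) Psi = \sum_i (t i)%:C * qf M (phi i).
Proof.
move=> t0 t1 u Psi.
have key M : qf (M *t (1%:M : 'M[C]_k)) Psi = \sum_i (t i)%:C * qf M (phi i).
  rewrite qf_tens; apply: eq_bigr => i _.
  by rewrite compT_glueT qfZr -expr2 sqr_sqrtr.
split => //; apply/unit_vecE.
rewrite -tens11 key.
under eq_bigr => i _ do rewrite (proj1 unit_vecE (u i)) mulr1.
by rewrite -rmorph_sum /= t1.
Qed.

Lemma decomp_tens n k (Psi : 'cV[C]_(n * k)) : unit_vec Psi ->
  exists t : 'I_k -> R, exists phi : 'I_k -> 'cV[C]_n,
  [/\ (forall i, 0 <= t i), \sum_i t i = 1, (forall i, unit_vec (phi i)) &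
    forall M, qf (M *t (1%:M : 'M[C]_k)) Psi = \sum_i (t i)%:C * qf M (phi i)].
Proof.
move=> /unit_vecE u.
pose t i := complex.Re (qf 1%:M (compT Psi i)).
have t0 i : 0 <= t i by apply: Re_ge0; apply: qf1_ge0.
have t1 : \sum_i t i = 1.
  by rewrite -Re_sum -qf_tens tens11 u.
have [i0 ti0] : exists i0, 0 < t i0.
  apply/not_existsP => hn.
  have : \sum_i t i <= 0.
    by apply: sumr_le0 => i _; rewrite leNgt; apply/negP => /(hn i) // ; apply: hn.
  by rewrite t1 ler10.
have [phi0 [u0 _]] := normalize ti0.
have [phi hphi] := choice (fun i => decomp1 (compT Psi i) u0).
exists t, phi; split => //.
- by move=> i; case: (hphi i).
- move=> M; rewrite qf_tens; apply: eq_bigr => i _.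
  by case: (hphi i) => _ ->.
Qed.

End Alg4.
Arguments glue_tens {R n k t phi}.
Arguments decomp_tens {R n k Psi}.

Section Alg5.
Local Open Scope complex_scope.
Variable R : rcfType.
Local Notation C := R[i].

Lemma coord_le1 n (psi : 'cV[C]_n) a : unit_vec psi -> `|psi a 0| <= 1.
Proof.
move=> /unit_vecE u.
rewrite -(@expr_le1 _ 2) //.
rewrite sqr_normc -u qf1E (bigD1 a) //= mulrC lerDl.
by apply: sumr_ge0 => b _; rewrite mulrC mulcJ_ge0.
Qed.

Lemma qf_bound n (W : 'M[C]_n) : exists B : R,
  forall psi, unit_vec psi -> - B <= complex.Re (qf W psi).
Proof.
pose cW : C := \sum_a \sum_b `|W a b|.
have cW0 : 0 <= cW by apply: sumr_ge0 => a _; apply: sumr_ge0 => b _.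
exists (complex.Re cW) => psi u.
have h1 : `|qf W psi| <= cW.
  rewrite qfE; apply: le_trans (ler_norm_sum _ _ _) _.
  apply: ler_sum => a _; apply: le_trans (ler_norm_sum _ _ _) _.
  apply: ler_sum => b _.
  rewrite !normrM.
  have -> : `|(psi a 0)^*| = `|psi a 0| by exact: normcJ.
  rewrite -[leRHS]mul1r -[leRHS]mulr1.
  apply: ler_pM => //; first by rewrite mulr_ge0.
  - by apply: ler_pM => //; apply: coord_le1.
  - exact: coord_le1.
have h2 := normc_ge_Re (qf W psi).
have h3 : `|complex.Re (qf W psi)| <= complex.Re cW.
  rewrite -lecR (RRe_real (ger0_real cW0)).
  exact: le_trans h2 h1.
by move: h3; rewrite ler_norml => /andP[].
Qed.

End Alg5.
Arguments qf_bound {R n}.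

Section Main.
Variable R : realType.
Local Notation C := R[i].

Lemma iotaE n m (A : 'I_m -> 'M[C]_n) psi :
  iota_star A (Defs.proj psi) = \row_j complex.Re (qf (A j) psi).
Proof. by apply/matrixP => a j; rewrite !mxE tr_projE. Qed.

Lemma bar_rel n m k (A : 'I_m -> 'M[C]_n) (W : 'M[C]_n) (Psi : 'cV[C]_(n * k))
   (t : 'I_k -> R) (phi : 'I_k -> 'cV[C]_n) :
  (forall M, qf (M *t (1%:M : 'M[C]_k)) Psi = \sum_i (t i)%:C%C * qf M (phi i)) ->
  iota_star (bar_iota k A) (Defs.proj Psi) = \sum_i t i *: iota_star A (Defs.proj (phi i)) /\
  expect (bar_W k W) Psi = \sum_i t i * expect W (phi i).
Proof.
move=> h; split.
  apply/matrixP => a j; rewrite iotaE !mxE summxE /bar_iota h Re_sum.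
  by apply: eq_bigr => i _; rewrite iotaE !mxE; case: (qf _ _) => x y /=; rewrite mul0r subr0.
by rewrite /expect -/(qf _ _) /bar_W h Re_sum; apply: eq_bigr => i _; rewrite /expect -/(qf _ _); case: (qf _ _) => x y /=; rewrite mul0r subr0.
Qed.

Lemma glue_in n m k (A : 'I_m -> 'M[C]_n) (W : 'M[C]_n)
   (t : 'I_k -> R) (phi : 'I_k -> 'cV[C]_n) :
  (forall i, 0 <= t i) -> \sum_i t i = 1 -> (forall i, unit_vec (phi i)) ->
  exists Psi : 'cV[C]_(n * k), unit_vec Psi /\
  iota_star (bar_iota k A) (Defs.proj Psi) = \sum_i t i *: iota_star A (Defs.proj (phi i)) /\
  expect (bar_W k W) Psi = \sum_i t i * expect W (phi i).
Proof.
move=> t0 t1 u; have [uP key] := glue_tens t0 t1 u.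
by eexists; split; [exact: uP | apply: bar_rel; exact: key].
Qed.

Lemma decomp_in n m k (A : 'I_m -> 'M[C]_n) (W : 'M[C]_n) (Psi : 'cV[C]_(n * k)) :
  unit_vec Psi -> exists (t : 'I_k -> R) (phi : 'I_k -> 'cV[C]_n),
  [/\ (forall i, 0 <= t i), \sum_i t i = 1, (forall i, unit_vec (phi i)),
  iota_star (bar_iota k A) (Defs.proj Psi) = \sum_i t i *: iota_star A (Defs.proj (phi i)) &
  expect (bar_W k W) Psi = \sum_i t i * expect W (phi i)].
Proof.
move=> u; have [t [phi [t0 t1 u' key]]] := decomp_tens u.
have [h1 h2] := @bar_rel _ _ _ A W _ _ _ key.
by exists t, phi; split.
Qed.

End Main.
Arguments glue_in {R n m k} A W {t phi}.
Arguments decomp_in {R n m k} A W {Psi}.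

Theorem proposition2p40 (R : realType) (n m k : nat)
  (A : 'I_m -> 'M[R[i]]_n) (W : 'M[R[i]]_n)
  (hA : forall j, is_hermitian (A j)) (hW : is_hermitian W) (hk : (0 < k)%N) :
  convk_dom k (pure_dom A) = pure_dom (bar_iota k A) /\
  (forall s, pure_dom (bar_iota k A) s ->
     convk_fun k (pure_dom A) (Fp A W) s = Fp (bar_iota k A) (bar_W k W) s).
Proof.
have dom : convk_dom k (pure_dom A) = pure_dom (bar_iota k A).
  apply/seteqP; split => s.
  - move=> [t [x [hx [t0 [t1 ->]]]]].
    have [phi hphi] := choice hx.
    have [Psi [u [h1 _]]] := glue_in A W t0 t1 (fun i => proj1 (hphi i)).
    exists Psi; split => //; rewrite h1.
    by apply: eq_bigr => i _; rewrite (proj2 (hphi i)).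
  - move=> [Psi [u <-]].
    have [t [phi [t0 t1 u' h1 _]]] := decomp_in A W u.
    exists t, (fun i => iota_star A (Defs.proj (phi i))); split.
      by move=> i; exists (phi i).
    by split.
split => // s hs.
have [B hB] := qf_bound W.
have [Bb hBb] := qf_bound (bar_W k W).
pose S (x : 'rV[R]_m) := [set expect W psi | psi in
   [set psi : 'cV[R[i]]_n | unit_vec psi /\ iota_star A (Defs.proj psi) = x]].
have Slb x : has_lbound (S x).
  by exists (- B) => y [psi [u _] <-]; apply: hB.
have Sne x : pure_dom A x -> S x !=set0.
  by move=> [psi [u hx]]; exists (expect W psi); exists psi.
have FpB x : pure_dom A x -> - B <= Fp A W x.
  by move=> hx; apply: lb_le_inf (Sne x hx) _ => y [psi [u _] <-]; apply: hB.
have FpS x y : S x y -> Fp A W x <= y.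
  by move=> hy; apply: (ge_inf (Slb x)).
pose SL := [set y | exists (t : 'I_k -> R) (x : 'I_k -> 'rV[R]_m),
     (forall i, pure_dom A (x i)) /\ (forall i, 0 <= t i) /\ \sum_i t i = 1 /\
     s = \sum_i t i *: x i /\ y = \sum_i t i * Fp A W (x i)].
pose SR := [set expect (bar_W k W) psi | psi in
   [set psi : 'cV[R[i]]_(n * k) | unit_vec psi /\ iota_star (bar_iota k A) (Defs.proj psi) = s]].
have SLlb : has_lbound SL.
  exists (- B) => y [t [x [hx [t0 [t1 [_ ->]]]]]].
  have -> : - B = \sum_i t i * (- B) by rewrite -mulr_suml t1 mul1r.
  by apply: ler_sum => i _; apply: ler_wpM2l => //; apply: FpB.
have SRlb : has_lbound SR.
  by exists (- Bb) => y [psi [u _] <-]; apply: hBb.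
have SLne : SL !=set0.
  have := hs; rewrite -dom => -[t [x [hx [t0 [t1 hs']]]]].
  by exists (\sum_i t i * Fp A W (x i)), t, x.
have SRne : SR !=set0.
  by move: hs => [psi [u hpsi]]; exists (expect (bar_W k W) psi), psi.
rewrite /convk_fun /Fp -/(S _) -/SL -/SR.
apply/eqP; rewrite eq_le; apply/andP; split.
- apply: lb_le_inf SRne _ => y [Psi [u hPsi] <-].
  have [t [phi [t0 t1 u' h1 h2]]] := decomp_in A W u.
  apply: (@le_trans _ _ (\sum_i t i * Fp A W (iota_star A (Defs.proj (phi i))))).
    apply: (ge_inf SLlb).
    exists t, (fun i => iota_star A (Defs.proj (phi i))); split.
      by move=> i; exists (phi i).
    by split => //; split => //; split => //; rewrite -hPsi h1.
  rewrite h2; apply: ler_sum => i _; apply: ler_wpM2l => //.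
  by apply: FpS; exists (phi i).
- apply: lb_le_inf SLne _ => y [t [x [hx [t0 [t1 [hsx ->]]]]]].
  apply/ler_addgt0Pr => e e0.
  have hc i : exists phi : 'cV[R[i]]_n, (unit_vec phi /\ iota_star A (Defs.proj phi) = x i)
      /\ expect W phi < Fp A W (x i) + e.
    have lt : Fp A W (x i) < Fp A W (x i) + e by rewrite ltrDl.
    have [z [phi hphi <-] hz] := inf_lt (Sne _ (hx i)) lt.
    by exists phi.
  have [phi hphi] := choice hc.
  have [Psi [u [h1 h2]]] := glue_in A W t0 t1 (fun i => proj1 (proj1 (hphi i))).
  apply: (@le_trans _ _ (expect (bar_W k W) Psi)).
    apply: (ge_inf SRlb); exists Psi => //; split => //.
    by rewrite h1 hsx; apply: eq_bigr => i _; rewrite (proj2 (proj1 (hphi i))).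
  rewrite h2.
  have -> : \sum_i t i * Fp A W (x i) + e = \sum_i t i * (Fp A W (x i) + e).
    by under [RHS]eq_bigr do rewrite mulrDr; rewrite big_split /= -mulr_suml t1 mul1r.
  by apply: ler_sum => i _; apply: ler_wpM2l => //; apply: ltW (proj2 (hphi i)).
Qed.
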